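(* Let $A$ be a ring, $\delta=(\delta_1,\ldots,\delta_n)$ an $n$-tuple of pairwise commuting derivations of $A$, $d_i\in\mathbb{N}\cup\{\infty\}$, $I=\{\alpha\in\mathbb{N}^n\mid\alpha_i\le d_i\ \forall i\}$, and suppose there are elements $y^{[\alpha]}\in N_\alpha$ ($\alpha\in I$) with $\delta^\alpha(y^{[\alpha]})=1$. Then: (1) there exists a unique $\delta$-descent $\{x^{[\alpha]}\mid\alpha\in I\}$ such that for each $0\neq\alpha\in I$, $x^{[\alpha]}=y^{[\alpha]}+\sum_{0\le\beta<\alpha}c_{\alpha\beta}y^{[\beta]}$ for some $c_{\alpha\beta}\in A^\delta$ with $c_{\alpha,0}=0$; (2) there exists a unique $\delta$-descent $\{z^{[\alpha]}\mid\alpha\in I\}$ such that for each $0\neq\alpha\in I$, $z^{[\alpha]}=y^{[\alpha]}+\sum_{0\le\beta<\alpha}y^{[\beta]}b_{\alpha\beta}$ for some $b_{\alpha\beta}\in A^\delta$ with $b_{\alpha,0}=0$.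
   Context: $A^\delta=\bigcap_i\ker\delta_i$; $N_\alpha=\bigcap_{i=1}^n\ker\delta_i^{\alpha_i+1}$; $\beta\le\alpha$ means $\beta_i\le\alpha_i$ for all $i$, and $\beta<\alpha$ means $\beta\le\alpha$, $\beta\neq\alpha$; $\delta^\alpha=\delta_1^{\alpha_1}\cdots\delta_n^{\alpha_n}$. A family $\{x^{[\alpha]}\mid\alpha\in I\}$ is a $\delta$-descent if $x^{[0]}=1$ and $\delta^\alpha(x^{[\beta]})=x^{[\beta-\alpha]}$ for all $\alpha\in\mathbb{N}^n$, $\beta\in I$, with $x^{[\gamma]}:=0$ for $\gamma\notin\mathbb{N}^n$. *)

(* Defs.v *)
From HB Require Import structures.
From mathcomp Require Import all_boot all_order all_algebra.
Set Implicit Arguments. Unset Strict Implicit. Unset Printing Implicit Defensive.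
Import GRing.Theory.
Local Open Scope ring_scope.

Definition mi (n : nat) := {ffun 'I_n -> nat}.

Definition mle n (b a : mi n) : bool := [forall i, (b i <= a i)%N].
Definition mlt n (b a : mi n) : bool := mle b a && (b != a).
(* componentwise difference (only used when b <= a) *)
Definition msub n (a b : mi n) : mi n := [ffun i => (a i - b i)%N].
Definition mzero n : mi n := [ffun _ => 0%N].

(* Index set I = {alpha | alpha_i <= d_i}, d_i in N u {oo} (None = oo) *)
Definition inI n (dd : 'I_n -> option nat) (a : mi n) : bool :=
  [forall i, if dd i is Some k then (a i <= k)%N else true].

Definition is_derivation (A : pzRingType) (D : A -> A) : Prop :=
  (forall x y, D (x + y) = D x + D y) /\
  (forall x y, D (x * y) = D x * y + x * D y).

(* delta^alpha = delta_1^{alpha_1} ... delta_n^{alpha_n} *)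
Definition dpow (A : Type) n (d : 'I_n -> A -> A) (a : mi n) : A -> A :=
  foldr (fun i f => fun x => iter (a i) (d i) (f x)) id (enum 'I_n).

Definition dconst (A : pzRingType) n (d : 'I_n -> A -> A) (c : A) : Prop :=
  forall i, d i c = 0.

Definition inN (A : pzRingType) n (d : 'I_n -> A -> A) (a : mi n) (x : A) : Prop :=
  forall i, iter (a i).+1 (d i) x = 0.

Definition is_descent (A : pzRingType) n (d : 'I_n -> A -> A)
    (dd : 'I_n -> option nat) (x : mi n -> A) : Prop :=
  x (mzero n) = 1 /\
  forall (a b : mi n), inI dd b ->
    dpow d a (x b) = if mle a b then x (msub b a) else 0.

Definition mbound n (a : mi n) : nat := \max_(i < n) a i.
Definition mof n (a : mi n) (b : {ffun 'I_n -> 'I_(mbound a).+1}) : mi n :=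
  [ffun i => nat_of_ord (b i)].
Definition sum_below (A : pzRingType) n (a : mi n) (F : mi n -> A) : A :=
  \sum_(b : {ffun 'I_n -> 'I_(mbound a).+1} | mlt (mof b) a) F (mof b).

Definition left_form (A : pzRingType) n (d : 'I_n -> A -> A)
    (dd : 'I_n -> option nat) (y x : mi n -> A) : Prop :=
  forall a : mi n, inI dd a -> a != mzero n ->
    exists c : mi n -> A,
      (forall b, mlt b a -> dconst d (c b)) /\ c (mzero n) = 0 /\
      x a = y a + sum_below a (fun b => c b * y b).

Definition right_form (A : pzRingType) n (d : 'I_n -> A -> A)
    (dd : 'I_n -> option nat) (y z : mi n -> A) : Prop :=
  forall a : mi n, inI dd a -> a != mzero n ->
    exists c : mi n -> A,
      (forall b, mlt b a -> dconst d (c b)) /\ c (mzero n) = 0 /\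
      z a = y a + sum_below a (fun b => y b * c b).

(* Main.v *)
Require Import Defs.
From mathcomp Require Import all_boot all_order all_algebra.
From mathcomp Require Import zify.
From Stdlib Require Import ClassicalEpsilon.
Set Implicit Arguments. Unset Strict Implicit. Unset Printing Implicit Defensive.
Import GRing.Theory.
Local Open Scope ring_scope.

Section MI.
Context (n : nat).
Implicit Types a b c g : mi n.

Definition deg a : nat := (\sum_i a i)%N.
Definition unitv (i : 'I_n) : mi n := [ffun j => nat_of_bool (j == i)].
Definition madd a b : mi n := [ffun i => (a i + b i)%N].

Lemma mleP a b : reflect (forall i, a i <= b i)%N (mle a b).
Proof. exact: forallP. Qed.

Lemma mle_refl a : mle a a.
Proof. by apply/mleP. Qed.

Lemma mle_trans a b c : mle a b -> mle b c -> mle a c.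
Proof. move=> /mleP h1 /mleP h2; apply/mleP=> i; exact: leq_trans (h1 i) (h2 i). Qed.

Lemma mle_anti a b : mle a b -> mle b a -> a = b.
Proof. move=> /mleP h1 /mleP h2; apply/ffunP=> i; by apply/eqP; rewrite eqn_leq h1 h2. Qed.

Lemma mle0 a : mle (mzero n) a.
Proof. by apply/mleP=> i; rewrite ffunE. Qed.

Lemma mle0E a : mle a (mzero n) = (a == mzero n).
Proof.
apply/idP/eqP=> [h|->]; last exact: mle_refl.
by apply: mle_anti h (mle0 _).
Qed.

Lemma mltW a b : mlt a b -> mle a b.
Proof. by case/andP. Qed.

Lemma mlt_neq a b : mlt a b -> a != b.
Proof. by case/andP. Qed.

Lemma deg_msub a b : mle b a -> deg a = (deg b + deg (msub a b))%N.
Proof.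
move=> /mleP h; rewrite /deg -big_split /=; apply: eq_bigr=> i _.
by rewrite ffunE subnKC.
Qed.

Lemma deg0 a : deg a = 0%N -> a = mzero n.
Proof.
move=> /eqP; rewrite /deg sum_nat_eq0 => /forallP h.
by apply/ffunP=> i; rewrite ffunE; apply/eqP; have := h i.
Qed.

Lemma deg_mzero : deg (mzero n) = 0%N.
Proof. by rewrite /deg big1 // => i _; rewrite ffunE. Qed.

Lemma msub_eq0 a b : mle b a -> msub a b = mzero n -> a = b.
Proof.
move=> /mleP h e; apply/ffunP=> i; move/ffunP: e => /(_ i); rewrite !ffunE => e.
have := h i; move: e; move: (a i : nat) (b i : nat); clear; lia.
Qed.

Lemma deg_mle a b : mle b a -> (deg b <= deg a)%N.
Proof. by move=> h; rewrite (deg_msub h) leq_addr. Qed.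

Lemma deg_mlt a b : mlt b a -> (deg b < deg a)%N.
Proof.
case/andP=> h ne; rewrite (deg_msub h) -addn1 leq_add2l lt0n.
apply/eqP=> /deg0 /(msub_eq0 h) e; by rewrite e eqxx in ne.
Qed.

Lemma msub0 a : msub a (mzero n) = a.
Proof. by apply/ffunP=> i; rewrite !ffunE subn0. Qed.

Lemma msubxx a : msub a a = mzero n.
Proof. by apply/ffunP=> i; rewrite !ffunE subnn. Qed.

Lemma msub_le a b : mle (msub a b) a.
Proof. by apply/mleP=> i; rewrite ffunE leq_subr. Qed.

Lemma msub_lt a b : mle b a -> b != mzero n -> mlt (msub a b) a.
Proof.
move=> h nz; rewrite /mlt msub_le /=; apply/eqP=> e.
have := deg_msub h; rewrite e => /eqP; rewrite -{1}(add0n (deg a)) eqn_add2r eq_sym.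
by move=> /eqP /deg0 e2; rewrite e2 eqxx in nz.
Qed.

Lemma inI_le (dd : 'I_n -> option nat) a b : mle b a -> inI dd a -> inI dd b.
Proof.
move=> /mleP h /forallP ha; apply/forallP=> i; have := ha i.
by case: (dd i)=> // k; apply: leq_trans.
Qed.

Lemma inI_msub (dd : 'I_n -> option nat) a b : inI dd a -> inI dd (msub a b).
Proof. exact/inI_le/msub_le. Qed.

Lemma mle_madd_unit g i : mle g (madd g (unitv i)).
Proof. by apply/mleP=> j; rewrite !ffunE leq_addr. Qed.

Lemma madd_unit_neq g i : g != madd g (unitv i).
Proof.
apply/eqP=> /ffunP /(_ i); rewrite !ffunE eqxx /=; lia.
Qed.

Lemma unit_le_msub g b i : mle g b ->
  mle (unitv i) (msub b g) = mle (madd g (unitv i)) b.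
Proof.
move=> /mleP h; apply/mleP/mleP=> H j; have := H j; have := h j;
rewrite !ffunE; case: (j == i) => /=; lia.
Qed.

Lemma msub_msub_unit g b i :
  msub (msub b g) (unitv i) = msub b (madd g (unitv i)).
Proof. by apply/ffunP=> j; rewrite !ffunE subnDA. Qed.

Lemma madd0 g : madd (mzero n) g = g.
Proof. by apply/ffunP=> j; rewrite !ffunE. Qed.

End MI.

Section Below.
Context (n : nat).
Implicit Types a b c g : mi n.

Definition below a : seq (mi n) :=
  [seq mof f | f <- enum {ffun 'I_n -> 'I_(mbound a).+1} & mlt (mof f) a].

Lemma mof_inj a : injective (@mof n a).
Proof.
move=> f g e; apply/ffunP=> i; apply/val_inj; move/ffunP: e => /(_ i).
by rewrite !ffunE.
Qed.

Lemma mem_below a b : (b \in below a) = mlt b a.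
Proof.
apply/idP/idP.
  by case/mapP=> f; rewrite mem_filter => /andP [h _] ->.
move=> h; apply/mapP.
have hb : forall i, (b i < (mbound a).+1)%N.
  move=> i; rewrite ltnS; apply: leq_trans (leq_bigmax i).
  by move/mltW/forallP: h => /(_ i).
exists [ffun i => Ordinal (hb i)].
  rewrite mem_filter mem_enum andbT.
  suff -> : mof [ffun i => Ordinal (hb i)] = b by [].
  by apply/ffunP=> i; rewrite !ffunE.
by apply/ffunP=> i; rewrite !ffunE.
Qed.

Lemma uniq_below a : uniq (below a).
Proof.
rewrite map_inj_uniq; last exact: mof_inj.
by rewrite filter_uniq // enum_uniq.
Qed.

Lemma sum_belowE (A : pzRingType) a (F : mi n -> A) :
  sum_below a F = \sum_(b <- below a) F b.
Proof.
by rewrite /sum_below big_map big_filter /index_enum -enumT.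
Qed.

End Below.
Section Dpow.
Context (A : pzRingType) (n : nat) (d : 'I_n -> A -> A)
  (hder : forall i, is_derivation (d i))
  (hcomm : forall i j x, d i (d j x) = d j (d i x)).

Definition Fs (s : seq 'I_n) (a : mi n) : A -> A :=
  foldr (fun i f => fun x => iter (a i) (d i) (f x)) id s.

Lemma dpowE a : dpow d a = Fs (enum 'I_n) a.
Proof. by []. Qed.

Definition addf (f : A -> A) := forall x y, f (x + y) = f x + f y.
Definition cstf (f : A -> A) := forall c x, dconst d c -> f (c * x) = c * f x.

Lemma addf0 f : addf f -> f 0 = 0.
Proof. by move=> h; apply: (addrI (f 0)); rewrite -h !addr0. Qed.

Lemma addfN f : addf f -> forall x, f (- x) = - f x.
Proof.
move=> h x; apply/eqP; rewrite -subr_eq0 opprK -h addNr. by rewrite (addf0 h).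
Qed.

Lemma addfB f : addf f -> forall x y, f (x - y) = f x - f y.
Proof. by move=> h x y; rewrite h addfN. Qed.

Lemma addf_sum f (I : Type) (r : seq I) (P : pred I) (F : I -> A) :
  addf f -> f (\sum_(i <- r | P i) F i) = \sum_(i <- r | P i) f (F i).
Proof.
move=> h; elim: r => [|x r IH]; first by rewrite !big_nil addf0.
by rewrite !big_cons; case: (P x); rewrite ?h IH.
Qed.

Lemma d_addf i : addf (d i).
Proof. by case: (hder i). Qed.

Lemma d_cstf i : cstf (d i).
Proof. move=> c x hc; case: (hder i) => _ ->; by rewrite hc mul0r add0r. Qed.

Lemma d_cstfr i c x : dconst d c -> d i (x * c) = d i x * c.
Proof. move=> hc; case: (hder i) => _ ->; by rewrite hc mulr0 addr0. Qed.

Lemma d1 i : d i 1 = 0.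
Proof.
case: (hder i) => _ h; have := h 1 1; rewrite !mulr1 !mul1r => e.
by apply: (addrI (d i 1)); rewrite -e addr0.
Qed.

Lemma iter_addf k f : addf f -> addf (iter k f).
Proof. move=> h; elim: k => // k IH x y /=; by rewrite IH h. Qed.

Lemma iter_cstf k f : cstf f -> cstf (iter k f).
Proof. move=> h; elim: k => // k IH c x hc /=; by rewrite IH // h. Qed.

Lemma Fs_addf s a : addf (Fs s a).
Proof.
elim: s => // i s IH x y /=; by rewrite IH (iter_addf _ (@d_addf i)).
Qed.

Lemma Fs_cstf s a : cstf (Fs s a).
Proof.
elim: s => // i s IH c x hc /=; by rewrite IH // (iter_cstf _ (@d_cstf i)).
Qed.

Lemma dpow_addf a : addf (dpow d a). Proof. exact: Fs_addf. Qed.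
Lemma dpow_cstf a : cstf (dpow d a). Proof. exact: Fs_cstf. Qed.

Lemma iter_d_comm m j k z : iter m (d j) (d k z) = d k (iter m (d j) z).
Proof. elim: m => //= m ->; by rewrite hcomm. Qed.

Lemma Fs_d_comm s a k z : Fs s a (d k z) = d k (Fs s a z).
Proof. elim: s => //= i s ->; by rewrite iter_d_comm. Qed.

Lemma Fs_step s a i x : uniq s ->
  Fs s (madd a (unitv i)) x = if i \in s then d i (Fs s a x) else Fs s a x.
Proof.
elim: s => //= j s IH /andP [js us]; rewrite IH // !ffunE in_cons.
case: (eqVneq j i) => [<-|ne] /=.
  by rewrite (negPf js) addn1.
rewrite addn0; case: (i \in s) => //; by rewrite iter_d_comm.
Qed.

Lemma dpow_step a i x : dpow d (madd a (unitv i)) x = d i (dpow d a x).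
Proof. by rewrite !dpowE Fs_step ?enum_uniq // mem_enum. Qed.

Lemma Fs0 s x : Fs s (mzero n) x = x.
Proof. by elim: s => //= i s ->; rewrite ffunE. Qed.

Lemma dpow0 x : dpow d (mzero n) x = x.
Proof. exact: Fs0. Qed.

Lemma dpow_unit i x : dpow d (unitv i) x = d i x.
Proof. by rewrite -(madd0 (unitv i)) dpow_step dpow0. Qed.

Lemma iter0 k j : iter k (d j) 0 = 0.
Proof. elim: k => //= k ->; exact: addf0 (@d_addf j). Qed.

Lemma Fs_N s a b z : inN d b z -> inN d b (Fs s a z).
Proof.
move=> h; elim: s => //= i s IH j.
elim: (a i) => [|m IHm]; first exact: IH.
rewrite (iterS m) iter_d_comm IHm; exact: addf0 (@d_addf i).
Qed.

Lemma dpow_N a b x : inN d b x -> ~~ mle a b -> dpow d a x = 0.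
Proof.
move=> hx; rewrite /mle negb_forall => /existsP [i hi].
rewrite -ltnNge in hi.
rewrite dpowE; have : i \in enum 'I_n by rewrite mem_enum.
elim: (enum 'I_n) => //= j s IH; rewrite in_cons.
case: eqP => [<-|_] /= h.
  rewrite -(subnK hi) iterD.
  by rewrite (Fs_N s a hx i) iter0.
by rewrite IH // iter0.
Qed.

Lemma dpow_one a : a != mzero n -> dpow d a 1 = 0.
Proof.
move=> nz; apply: (@dpow_N a (mzero n)).
  by move=> i; rewrite ffunE /= d1.
by rewrite mle0E.
Qed.

End Dpow.
Section Comb.
Context (A : pzRingType) (n : nat) (d : 'I_n -> A -> A)
  (hder : forall i, is_derivation (d i))
  (y : mi n -> A).

Lemma dconst0 : dconst d 0.
Proof. move=> i; exact: addf0 (d_addf hder i). Qed.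
Lemma dconstN c : dconst d c -> dconst d (- c).
Proof. move=> h i; by rewrite (addfN (d_addf hder i)) h oppr0. Qed.
Lemma dconstM c1 c2 : dconst d c1 -> dconst d c2 -> dconst d (c1 * c2).
Proof. move=> h1 h2 i; by rewrite (d_cstf hder) // h2 mulr0. Qed.
Lemma dconstB c1 c2 : dconst d c1 -> dconst d c2 -> dconst d (c1 - c2).
Proof. move=> h1 h2 i; by rewrite (addfB (d_addf hder i)) h1 h2 subrr. Qed.

Definition comb (a : mi n) (w : A) :=
  exists s : seq (A * mi n),
    (forall p, p \in s -> [/\ dconst d p.1, mlt p.2 a & p.2 != mzero n]) /\
    w = \sum_(p <- s) p.1 * y p.2.

Lemma comb0 a : comb a 0.
Proof. by exists [::]; rewrite big_nil. Qed.

Lemma combD a w1 w2 : comb a w1 -> comb a w2 -> comb a (w1 + w2).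
Proof.
move=> [s1 [h1 ->]] [s2 [h2 ->]]; exists (s1 ++ s2); split; last by rewrite big_cat.
by move=> p; rewrite mem_cat => /orP [] ?; [apply: h1 | apply: h2].
Qed.

Lemma combZ a c w : dconst d c -> comb a w -> comb a (c * w).
Proof.
move=> hc [s [h ->]]; exists [seq (c * p.1, p.2) | p <- s]; split.
  move=> p /mapP [q qs ->] /=; case: (h q qs) => ??? ; split=> //.
  exact: dconstM.
by rewrite big_map mulr_sumr; apply: eq_bigr => p _; rewrite mulrA.
Qed.

Lemma combN a w : comb a w -> comb a (- w).
Proof.
move=> h; rewrite -mulN1r; apply: combZ h.
by rewrite -[-1]/(- (1 : A)); apply/dconstN=> i; exact: d1.
Qed.

Lemma comb_mono a b w : mle b a -> comb b w -> comb a w.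
Proof.
move=> hab [s [h ->]]; exists s; split=> // p ps; case: (h p ps) => h1 h2 h3.
split=> //; rewrite /mlt (mle_trans (mltW h2) hab) /=; apply/eqP=> e.
by move: h2; rewrite e /mlt => /andP [h4 /negP]; apply; apply/eqP/mle_anti.
Qed.

Lemma comb_y a b c : dconst d c -> mlt b a -> b != mzero n -> comb a (c * y b).
Proof. move=> hc hb nz; exists [:: (c, b)]; split; last by rewrite big_seq1.
by move=> p; rewrite mem_seq1 => /eqP ->.
Qed.

Lemma comb_sum a (I : Type) (r : seq I) (P : pred I) (F : I -> A) :
  (forall i, P i -> comb a (F i)) -> comb a (\sum_(i <- r | P i) F i).
Proof.
move=> h; elim: r => [|x r IH]; first by rewrite big_nil; exact: comb0.
rewrite big_cons; case: ifP => // Px; exact: combD (h x Px) IH.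
Qed.

Lemma collect a w : comb a w -> exists c : mi n -> A,
  (forall b, mlt b a -> dconst d (c b)) /\ c (mzero n) = 0 /\
  w = sum_below a (fun b => c b * y b).
Proof.
move=> [s [h ->]].
exists (fun b => \sum_(p <- s | p.2 == b) p.1); split; last split.
- move=> b _ i; rewrite (addf_sum _ _ _ (d_addf hder i)) big1_seq //.
  by move=> p /andP [_ ps]; case: (h p ps).
- rewrite big1_seq // => p /andP [/eqP e ps]; case: (h p ps) => _ _.
  by rewrite e eqxx.
rewrite sum_belowE.
transitivity (\sum_(b <- below a) \sum_(p <- s) (if p.2 == b then p.1 * y b else 0)); last first.
  apply: eq_bigr => b _; by rewrite mulr_suml [RHS]big_mkcond.
rewrite exchange_big; apply: eq_big_seq => p ps.
case: (h p ps) => _ hlt _.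
rewrite (bigD1_seq p.2) ?mem_below ?uniq_below //= eqxx big1 ?addr0 //.
by move=> b /negPf; rewrite eq_sym => ->.
Qed.

End Comb.
Section Uniq.
Context (A : pzRingType) (n : nat) (d : 'I_n -> A -> A)
  (dd : 'I_n -> option nat) (y : mi n -> A)
  (hder : forall i, is_derivation (d i))
  (hcomm : forall i j x, d i (d j x) = d j (d i x))
  (hy : forall a : mi n, inI dd a -> inN d a (y a) /\ dpow d a (y a) = 1).

Lemma dpowZ a c z : dconst d c -> dpow d a (c * z) = c * dpow d a z.
Proof. move=> hc; exact: (dpow_cstf hder a z hc). Qed.

Lemma uniq_left x x' : is_descent d dd x -> left_form d dd y x ->
  is_descent d dd x' -> left_form d dd y x' ->
  forall a, inI dd a -> x' a = x a.
Proof.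
move=> [x0 hx] lx [x'0 hx'] lx' a.
move: {2}(deg a) (leqnn (deg a)) => m; elim: m a => [|m IHm] a ha hIa.
  have -> : a = mzero n by apply: deg0; lia.
  by rewrite x0 x'0.
have [->|nz] := eqVneq a (mzero n); first by rewrite x0 x'0.
have [c [hc [c0 ex]]] := lx a hIa nz.
have [c' [hc' [c'0 ex']]] := lx' a hIa nz.
pose e b := c' b - c b.
have he : forall b, mlt b a -> dconst d (e b).
  by move=> b hb; apply: dconstB => //; [apply: hc' | apply: hc].
have hw : x' a - x a = \sum_(b <- below a) e b * y b.
  rewrite ex ex' !sum_belowE opprD addrACA subrr add0r -sumrB; apply: eq_bigr => b _.
  by rewrite mulrBl.
have hdw : forall g, g != mzero n -> dpow d g (x' a - x a) = 0.
  move=> g gnz; rewrite (addfB (dpow_addf hder g)) hx' // hx //.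
  case: ifP => hle; last by rewrite subrr.
  rewrite (IHm (msub a g)) ?subrr //; last exact: inI_msub.
  have := deg_mlt (msub_lt hle gnz); lia.
have key : forall k b, (deg a - deg b <= k)%N -> mlt b a -> e b = 0.
  elim=> [|k IHk] b hk hb.
  - have := deg_mlt hb; lia.
  - have [->|bnz] := eqVneq b (mzero n); first by rewrite /e c0 c'0 subrr.
    have hIb : inI dd b by apply: inI_le (mltW hb) hIa.
    have := hdw b bnz; rewrite hw (addf_sum _ _ _ (dpow_addf hder b)).
    rewrite (bigD1_seq b) ?mem_below ?uniq_below //=.
    rewrite dpowZ; last exact: he.
    rewrite (proj2 (hy hIb)) mulr1 big_seq_cond big1 ?addr0 //.
    move=> b' /andP [hb' nb']; rewrite mem_below in hb'.
    rewrite dpowZ; last exact: he.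
    have hIb' : inI dd b' by apply: inI_le (mltW hb') hIa.
    case hle: (mle b b').
      rewrite (IHk b') ?mul0r //.
      have : mlt b b' by rewrite /mlt hle eq_sym.
      move=> /deg_mlt; have := deg_mlt hb'; have := deg_mlt hb; lia.
    by rewrite (dpow_N hder hcomm (proj1 (hy hIb'))) ?hle ?mulr0.
apply/eqP; rewrite -subr_eq0 hw big_seq big1 // => b; rewrite mem_below => hb.
by rewrite (key (deg a - deg b)%N) ?mul0r.
Qed.

End Uniq.

Lemma mle_mlt_trans n (g b a : mi n) : mle g b -> mlt b a -> mlt g a.
Proof.
move=> h1 /andP [h2 ne]; rewrite /mlt (mle_trans h1 h2) /=; apply/eqP=> e.
move: h1; rewrite e => h1; by rewrite (mle_anti h2 h1) eqxx in ne.
Qed.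

Lemma sum_ifM (A : pzRingType) (I : eqType) (r : seq I) (P Q : pred I)
  (c X : I -> A) : (forall b, P b -> Q b) ->
  \sum_(b <- r | Q b) c b * (if P b then X b else 0) = \sum_(b <- r | P b) c b * X b.
Proof.
move=> h; rewrite big_mkcond [RHS]big_mkcond; apply: eq_bigr => b _.
by case Pb: (P b); rewrite ?(h b Pb) ?mulr0 //; case: (Q b).
Qed.

Lemma split_sum (A : pzRingType) n (a g : mi n) (F : mi n -> A) : mlt g a ->
  \sum_(b <- below a | mle g b) F b = F g + \sum_(b <- below a | mlt g b) F b.
Proof.
move=> hg; rewrite big_mkcond (bigD1_seq g) ?mem_below ?uniq_below //= mle_refl.
congr (_ + _); rewrite -big_mkcondr; apply: eq_bigl => b.
by rewrite /mlt andbC eq_sym.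
Qed.

Lemma empty_sum (A : pzRingType) n (a g : mi n) (F : mi n -> A) : ~~ mlt g a ->
  \sum_(b <- below a | mle g b) F b = 0.
Proof.
move=> hg; rewrite big_seq_cond big1 // => b /andP [hb hgb].
by rewrite mem_below in hb; rewrite (mle_mlt_trans hgb hb) in hg.
Qed.
Section Core.
Context (A : pzRingType) (n : nat) (d : 'I_n -> A -> A)
  (dd : 'I_n -> option nat) (y : mi n -> A)
  (hder : forall i, is_derivation (d i))
  (hcomm : forall i j x, d i (d j x) = d j (d i x))
  (hy : forall a : mi n, inI dd a -> inN d a (y a) /\ dpow d a (y a) = 1).

Definition Good N (x : mi n -> A) :=
  x (mzero n) = 1 /\ forall b, inI dd b -> (deg b <= N)%N ->
    (forall g, dpow d g (x b) = if mle g b then x (msub b g) else 0) /\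
    (b != mzero n -> exists w, comb d y b w /\ x b = y b + w).

Definition Qw (x : mi n -> A) a (w : A) :=
  (forall g, g != mzero n -> dpow d g w = if mle g a then x (msub a g) else 0) /\
  exists v, comb d y a v /\ w = y a + v.

Fixpoint E (x : mi n -> A) (a : mi n) (k : nat) (g : mi n) : A :=
  if k is k'.+1 then
    dpow d g (y a) - x (msub a g) -
      \sum_(b <- below a | mlt g b) E x a k' b * x (msub b g)
  else 0.

Lemma E_stable x a k k' g : (deg a - deg g < k)%N -> (deg a - deg g < k')%N ->
  E x a k g = E x a k' g.
Proof.
elim: k k' g => [|k IH] [|k'] g // h1 h2 /=.
congr (_ - _); rewrite big_seq_cond [RHS]big_seq_cond; apply: eq_bigr => b.
move=> /andP [hb hgb]; rewrite mem_below in hb; rewrite (IH k') //.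
  have := deg_mlt hb; have := deg_mlt hgb; lia.
have := deg_mlt hb; have := deg_mlt hgb; lia.
Qed.

Definition ee x a g := E x a (deg a - deg g).+1 g.

Lemma ee_eq x a g : ee x a g =
  dpow d g (y a) - x (msub a g) -
    \sum_(b <- below a | mlt g b) ee x a b * x (msub b g).
Proof.
rewrite /ee /=; congr (_ - _); rewrite big_seq_cond [RHS]big_seq_cond.
apply: eq_bigr => b /andP [hb hgb]; rewrite mem_below in hb.
rewrite (@E_stable x a _ (deg a - deg b).+1 b) //.
have := deg_mlt hb; have := deg_mlt hgb; lia.
Qed.

Lemma dpowZ' a c z : dconst d c -> dpow d a (c * z) = c * dpow d a z.
Proof. move=> hc; exact: (dpow_cstf hder a z hc). Qed.

Section Fixed.
Context (N : nat) (x : mi n -> A) (a : mi n) (hG : Good N x) (ha : inI dd a)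
  (hdeg : deg a = N.+1).

Lemma goodx b : mlt b a -> forall g,
  dpow d g (x b) = if mle g b then x (msub b g) else 0.
Proof.
move=> hb; apply: (proj1 ((proj2 hG) b (inI_le (mltW hb) ha) _)).
have := deg_mlt hb; lia.
Qed.

Lemma ee_const k g : (deg a - deg g <= k)%N -> mlt g a -> g != mzero n ->
  dconst d (ee x a g).
Proof.
elim: k g => [|k IH] g hk hga gnz.
  have := deg_mlt hga; lia.
move=> i; set g' := madd g (unitv i).
have hgg' : mle g g' by apply: mle_madd_unit.
have ngg' : g != g' by apply: madd_unit_neq.
rewrite ee_eq !(addfB (d_addf hder i)) -(dpow_step hcomm).
have hxg : mlt (msub a g) a by apply: msub_lt (mltW hga) gnz.
rewrite -(dpow_unit hcomm) (goodx hxg) unit_le_msub ?(mltW hga) // msub_msub_unit.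
rewrite (addf_sum _ _ _ (d_addf hder i)).
have -> : \sum_(b <- below a | mlt g b) d i (ee x a b * x (msub b g)) =
          \sum_(b <- below a | mle g' b) ee x a b * x (msub b g').
  rewrite -(@sum_ifM _ _ _ (fun b => mle g' b) (fun b => mlt g b)); last first.
    move=> b hb; rewrite /mlt (mle_trans hgg' hb) /=; apply/eqP=> e.
    by rewrite -e in hb; rewrite (mle_anti hgg' hb) eqxx in ngg'.
  rewrite big_seq_cond [RHS]big_seq_cond; apply: eq_bigr => b /andP [hb hgb].
  rewrite mem_below in hb.
  have hbnz : b != mzero n.
    apply/eqP=> e; move: hgb; rewrite e /mlt mle0E => /andP [/eqP e2].
    by rewrite e2 eqxx in gnz.
  rewrite (d_cstf hder); last first.
    apply: (IH b) => //; have := deg_mlt hb; have := deg_mlt hgb; lia.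
  rewrite -(dpow_unit hcomm) goodx; last first.
    by apply: mle_mlt_trans (msub_le _ _) hb.
  by rewrite unit_le_msub ?(mltW hgb) // msub_msub_unit.
have [hg'a|hg'a] := boolP (mlt g' a).
  rewrite (mltW hg'a) split_sum // msubxx (proj1 hG) mulr1 (ee_eq x a g').
  by rewrite subrK subrr.
rewrite empty_sum // subr0.
case: (boolP (mle g' a)) => hle.
  have e : g' = a by apply/eqP; move: hg'a; rewrite /mlt hle /= negbK.
  by rewrite -/g' e (proj2 (hy ha)) msubxx (proj1 hG) subrr.
by rewrite -/g' (dpow_N hder hcomm (proj1 (hy ha))) // subrr.
Qed.

Lemma core : exists w, Qw x a w.
Proof.
have hec : forall b, mlt b a -> b != mzero n -> dconst d (ee x a b).
  by move=> b hb bnz; apply: (@ee_const (deg a - deg b)).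
exists (y a - \sum_(b <- below a | b != mzero n) ee x a b * x b); split.
  move=> g gnz; rewrite (addfB (dpow_addf hder g)) (addf_sum _ _ _ (dpow_addf hder g)).
  have -> : \sum_(b <- below a | b != mzero n) dpow d g (ee x a b * x b) =
            \sum_(b <- below a | mle g b) ee x a b * x (msub b g).
    rewrite -(@sum_ifM A _ (below a) (fun b => mle g b) (fun b => b != mzero n)); last first.
      move=> b hgb; apply/eqP=> e; move: hgb; rewrite e mle0E => /eqP e2.
      by rewrite e2 eqxx in gnz.
    rewrite big_seq_cond [RHS]big_seq_cond; apply: eq_bigr => b /andP [hb bnz].
    rewrite mem_below in hb; rewrite dpowZ'; last exact: hec.
    by rewrite goodx.
  have [hga|hga] := boolP (mlt g a).
    rewrite (mltW hga) split_sum // msubxx (proj1 hG) mulr1 (ee_eq x a g).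
    by rewrite subrK opprB addrC subrK.
  rewrite empty_sum // subr0.
  case: (boolP (mle g a)) => hle.
    have e : g = a by apply/eqP; move: hga; rewrite /mlt hle /= negbK.
    by rewrite e (proj2 (hy ha)) msubxx (proj1 hG).
  by rewrite (dpow_N hder hcomm (proj1 (hy ha))).
exists (- \sum_(b <- below a | b != mzero n) ee x a b * x b); split => //.
apply: (combN hder); rewrite big_seq_cond; apply: comb_sum => b /andP [hb bnz].
rewrite mem_below in hb.
have hIb : inI dd b by apply: inI_le (mltW hb) ha.
have [_ /(_ bnz) [v [hv ->]]] := (proj2 hG) b hIb ltac:(have := deg_mlt hb; lia).
rewrite mulrDr; apply: combD; first by apply: comb_y => //; apply: hec.
apply: (combZ hder); first by apply: hec.
exact: comb_mono (mltW hb) hv.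
Qed.

End Fixed.
End Core.
Section Assembly.
Context (A : pzRingType) (n : nat) (d : 'I_n -> A -> A)
  (dd : 'I_n -> option nat) (y : mi n -> A)
  (hder : forall i, is_derivation (d i))
  (hcomm : forall i j x, d i (d j x) = d j (d i x))
  (hy : forall a : mi n, inI dd a -> inN d a (y a) /\ dpow d a (y a) = 1).

Definition pick (x : mi n -> A) (a : mi n) : A :=
  epsilon (inhabits (0 : A)) (Qw d y x a).

Fixpoint xs (N : nat) : mi n -> A :=
  if N is N'.+1 then fun a => if (deg a <= N')%N then xs N' a else pick (xs N') a
  else fun _ => 1.

Lemma xs_good N : Good d dd y N (xs N).
Proof.
elim: N => [|N IH].
  split=> // b hb hdb; have e : b = mzero n by apply: deg0; lia.
  subst b; split; last by rewrite eqxx.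
  move=> g; rewrite mle0E; case: eqP => [->|/eqP ne]; first exact: dpow0.
  exact: (dpow_one hder hcomm).
have x0 : xs N.+1 (mzero n) = 1 by rewrite /= deg_mzero /=; exact: (proj1 IH).
have hsame : forall b, (deg b <= N)%N -> xs N.+1 b = xs N b by move=> b hb /=; rewrite hb.
split=> // b hIb hdb.
have [hle|hgt] := boolP (deg b <= N)%N.
  have [h1 h2] := (proj2 IH) b hIb hle; split; last by rewrite hsame.
  move=> g; rewrite hsame // h1; case: ifP => // _; rewrite hsame //.
  exact: leq_trans (deg_mle (msub_le _ _)) hle.
have hd : deg b = N.+1 by lia.
have hQ : Qw d y (xs N) b (xs N.+1 b).
  rewrite /= (negPf hgt); apply: epsilon_spec; exact: (core hder hcomm hy IH hIb hd).
case: hQ => hQ1 [v [hv hv']]; split; last by move=> _; exists v.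
move=> g; have [->|gnz] := eqVneq g (mzero n).
  by rewrite dpow0 mle0 msub0.
rewrite hQ1 //; case: ifP => // hgb; rewrite hsame //.
have := deg_mlt (msub_lt hgb gnz); lia.
Qed.

Definition X (a : mi n) := xs (deg a) a.

Lemma xs_stable M a : (deg a <= M)%N -> xs M a = X a.
Proof.
move=> h; rewrite -(subnKC h); elim: (M - deg a)%N => [|k IH]; first by rewrite addn0.
by rewrite addnS /= leq_addr.
Qed.

Lemma part_left : exists x : mi n -> A,
     is_descent d dd x /\ left_form d dd y x /\
     forall x' : mi n -> A, is_descent d dd x' -> left_form d dd y x' ->
       forall a, inI dd a -> x' a = x a.
Proof.
have hdesc : is_descent d dd X.
  split; first by rewrite /X deg_mzero; exact: (proj1 (xs_good 0)).
  move=> a b hb; rewrite /X ((proj1 ((proj2 (xs_good (deg b))) b hb (leqnn _)))).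
  case: ifP => // _; apply: xs_stable; exact: deg_mle (msub_le _ _).
have hleft : left_form d dd y X.
  move=> a ha anz; rewrite /X; have [_ /(_ anz) [w [hw ->]]] := (proj2 (xs_good (deg a))) a ha (leqnn _).
  have [c [hc [c0 ->]]] := collect hder hw; by exists c.
exists X; split=> //; split=> //.
by move=> x' h1 h2; apply: (uniq_left hder hcomm hy).
Qed.

End Assembly.

Unset Implicit Arguments.

Theorem lemma2p3 (A : pzRingType) (n : nat) (d : 'I_n -> A -> A)
  (dd : 'I_n -> option nat) (y : mi n -> A)
  (hder : forall i, is_derivation (d i))
  (hcomm : forall i j x, d i (d j x) = d j (d i x))
  (hy : forall a : mi n, inI dd a -> inN d a (y a) /\ dpow d a (y a) = 1) :
  (exists x : mi n -> A,
     is_descent d dd x /\ left_form d dd y x /\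
     forall x' : mi n -> A, is_descent d dd x' -> left_form d dd y x' ->
       forall a, inI dd a -> x' a = x a) /\
  (exists z : mi n -> A,
     is_descent d dd z /\ right_form d dd y z /\
     forall z' : mi n -> A, is_descent d dd z' -> right_form d dd y z' ->
       forall a, inI dd a -> z' a = z a).
Proof.
split; first exact: part_left.
have hder' : forall i, @is_derivation A^c (d i).
  move=> i; case: (hder i) => h1 h2; split=> // u v.
  by rewrite /= h2 GRing.addrC.
have := @part_left A^c n d dd y hder' hcomm hy.
exact.
Qed.
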